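(* Let $A$ be a real symmetric nonsingular $n\times n$ matrix and let $L$ be a linear subspace of $\mathbb R^n$ with orthogonal complement $L^*$. Suppose $A$ is positive definite on $L$ (i.e. $\mathbf x^TA\mathbf x>0$ for all nonzero $\mathbf x\in L$) and $A^{-1}$ is positive definite on $L^*$ (i.e. $\mathbf y^TA^{-1}\mathbf y>0$ for all nonzero $\mathbf y\in L^*$). Then $A$ is positive definite. *)

(* Defs.v *)
From mathcomp Require Import all_boot all_order all_algebra.
Set Implicit Arguments. Unset Strict Implicit. Unset Printing Implicit Defensive.
Import GRing.Theory Num.Theory.
Local Open Scope ring_scope.

Definition qform (R : realFieldType) (n : nat) (A : 'M[R]_n) (x : 'rV[R]_n) : R :=
  (x *m A *m x^T) 0 0.

(* A subspace L of R^n is represented (as in mxalgebra) by a matrix whose row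
   space is L; x \in L iff (x <= L)%MS. *)
Definition in_orth (R : realFieldType) (n m : nat) (L : 'M[R]_(m, n)) (y : 'rV[R]_n) : Prop :=
  L *m y^T = 0.

Definition posdef_on (R : realFieldType) (n : nat) (A : 'M[R]_n) (P : 'rV[R]_n -> Prop) : Prop :=
  forall x : 'rV[R]_n, P x -> x != 0 -> 0 < qform A x.

Definition posdef (R : realFieldType) (n : nat) (A : 'M[R]_n) : Prop :=
  posdef_on A (fun _ => True).

(* Main.v *)
Require Import Defs.
From mathcomp Require Import all_boot all_order all_algebra.
Import Order.TTheory GRing.Theory Num.Theory.
Local Open Scope ring_scope.
Set Implicit Arguments. Unset Strict Implicit.

Lemma orth_lem (R : realFieldType) (n m : nat) (L : 'M[R]_(m, n)) (x y : 'rV[R]_n) :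
  (x <= L)%MS -> y *m L^T = 0 -> x *m y^T = 0.
Proof.
move=> /submxP[u ->] hy.
by rewrite -mulmxA -[L]trmxK -trmx_mul hy trmx0 mulmx0.
Qed.

Lemma qform0 (R : realFieldType) (n : nat) (A : 'M[R]_n) : qform A 0 = 0.
Proof. by rewrite /qform !mul0mx mxE. Qed.

Lemma qform_ge0 (R : realFieldType) (n : nat) (A : 'M[R]_n) P x :
  posdef_on A P -> P x -> 0 <= qform A x.
Proof.
move=> h Px; have [->|nz] := eqVneq x 0; first by rewrite qform0.
exact/ltW/h.
Qed.

Theorem theorem3p4 (R : realFieldType) (n m : nat) (A : 'M[R]_n) (L : 'M[R]_(m, n)) :
  A^T = A ->
  A \in unitmx ->
  posdef_on A (fun x => (x <= L)%MS) ->
  posdef_on (invmx A) (fun y => in_orth L y) ->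
  posdef A.
Proof.
move=> sA uA PL PK z _ nz.
set Ai := invmx A.
have AiT : Ai^T = Ai by rewrite /Ai trmx_inv sA.
set K := kermx L^T *m Ai.
have key : forall (y : 'rV[R]_n), y *m L^T = 0 ->
    [/\ forall x : 'rV[R]_n, (x <= L)%MS -> x *m A *m (y *m Ai)^T = 0,
        forall x : 'rV[R]_n, (x <= L)%MS -> y *m Ai *m A *m x^T = 0 &
        qform A (y *m Ai) = qform Ai y].
  move=> y hy; split.
  - move=> x xL; rewrite trmx_mul AiT mulmxA -(mulmxA x A Ai) mulmxV //.
    by rewrite mulmx1; apply: orth_lem xL hy.
  - move=> x xL; rewrite -(mulmxA y Ai A) mulVmx // mulmx1.
    by rewrite -[y]trmxK -trmx_mul (orth_lem xL hy) trmx0.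
  - rewrite /qform trmx_mul AiT -(mulmxA y Ai A) mulVmx // mulmx1.
    by rewrite mulmxA.
have kerK : forall D : 'rV[R]_n, (D *m kermx L^T) *m L^T = 0.
  by move=> D; rewrite -mulmxA mulmx_ker mulmx0.
have cap : forall v : 'rV[R]_n, (v <= L)%MS -> (v <= K)%MS -> v = 0.
  move=> v vL /submxP[D vD].
  have [_ _ hq] := key _ (kerK D).
  have [h1 _ _] := key _ (kerK D).
  have e : v = D *m kermx L^T *m Ai by rewrite vD /K mulmxA.
  have q0 : qform A v = 0.
    rewrite /qform {2}e h1 ?mxE //.
  apply/eqP; apply/negPn/negP => nv.
  by have := PL v vL nv; rewrite q0 ltxx.
have capE : (L :&: K)%MS = 0.
  apply/row_matrixP => i; rewrite row0; apply: cap.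
    exact: submx_trans (row_sub i _) (capmxSl _ _).
  exact: submx_trans (row_sub i _) (capmxSr _ _).
have rK : \rank K = (n - \rank L)%N.
  by rewrite /K mxrankMfree ?row_free_unit ?unitmx_inv // mxrank_ker mxrank_tr.
have full : row_full (L + K)%MS.
  rewrite -col_leq_rank.
  have := mxrank_sum_cap L K; rewrite capE mxrank0 addn0 rK => ->.
  by rewrite subnKC // rank_leq_col.
have /sub_addsmxP[[u1 u2] /= ez] := submx_full z full.
set x := u1 *m L; set y := u2 *m kermx L^T.
have xL : (x <= L)%MS by apply/submxP; exists u1.
have hy := kerK u2.
have ez' : z = x + y *m Ai by rewrite ez /K mulmxA.
have [h1 h2 h3] := key _ hy.
have qz : qform A z = qform A x + qform Ai y.
  rewrite -h3 ez' /qform linearD /= !mulmxDl !mulmxDr (h1 _ xL) (h2 _ xL).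
  by rewrite addr0 add0r mxE.
have yo : in_orth L y by rewrite /in_orth -[L]trmxK -trmx_mul hy trmx0.
rewrite qz; have [x0|xn0] := eqVneq x 0.
  rewrite x0 qform0 add0r; apply: PK => //.
  by apply: contra nz => /eqP y0; rewrite ez' x0 y0 mul0mx addr0.
by rewrite ltr_wpDr ?(qform_ge0 PK) // PL.
Qed.
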